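(* For any extended mm-space $X$, there exist $(a_n)_{n=1}^N\in\mathcal A_1$ and a sequence of mm-spaces $\{X_n\}_{n=1}^N$ such that the direct sum $\sum_{n=1}^N X_n^{a_n}$ is mm-isomorphic to $X$. Moreover, if $(a_n)_{n=1}^N,(b_m)_{m=1}^M\in\mathcal A_1$, $\{X_n\}_{n=1}^N$, $\{Y_m\}_{m=1}^M$ are sequences of mm-spaces, and $\sum_{n=1}^N X_n^{a_n}$ and $\sum_{m=1}^M Y_m^{b_m}$ are mm-isomorphic, then $N=M$ and there exists a bijective map $\varphi:[N]\to[N]$ such that $a_n=b_{\varphi(n)}$ and $X_n$ is mm-isomorphic to $Y_{\varphi(n)}$ for each $n\in[N]$.
   Context: An mm-space is a triple $(X,d_X,\mu_X)$ with $(X,d_X)$ a complete separable metric space and $\mu_X$ a Borel probability measure; an extended mm-space is the same with the metric allowed to take values in $[0,+\infty]$. Two (extended) mm-spaces are mm-isomorphic if there is an isometry $f:\operatorname{supp}\mu_X\to\operatorname{supp}\mu_Y$ with $f_*\mu_X=\mu_Y$; one assumes $X=\operatorname{supp}\mu_X$. $\overline{\mathbb N}=\mathbb N\cup\{\infty\}$, $[N]=\{1,\dots,N\}$ for finite $N$, $[\infty]=\mathbb N$. $\mathcal A_1$ is the set of sequences $(a_n)_{n=1}^N$, $N\in\overline{\mathbb N}$, with $a_n\in(0,1]$ and $\sum_n a_n=1$. For $(a_n)_{n=1}^N\in\mathcal A_1$ and mm-spaces $X_n$, the direct sum $\sum_{n=1}^N X_n^{a_n}$ is the extended mm-space on the disjoint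 union $\bigsqcup_n X_n$ with extended metric $d(x,y)=d_{X_n}(x,y)$ if $x,y\in X_n$ and $d(x,y)=+\infty$ if $x,y$ lie in different pieces, and measure $\sum_n a_n\mu_{X_n}$. *)

(* Defs.v *)
From mathcomp Require Import all_boot all_order all_algebra.
From mathcomp Require Import all_classical all_reals all_analysis.
Set Implicit Arguments. Unset Strict Implicit. Unset Printing Implicit Defensive.
Import Order.TTheory GRing.Theory Num.Theory.
Import numFieldNormedType.Exports.
Local Open Scope classical_set_scope.
Local Open Scope ring_scope.

(* Raw data of an (extended) metric measure mmdata: a carrier type, an
   extended metric with values in \bar R and a set function (meaningful on
   Borel sets only). *)
Record mmdata (R : realType) := Space {
  mcar :> Type;
  mdist : mcar -> mcar -> \bar R;
  mmeas : set mcar -> \bar R }.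

Section Defs.
Variable R : realType.
Local Open Scope ereal_scope.

Definition eopen (T : Type) (d : T -> T -> \bar R) (A : set T) : Prop :=
  forall x, A x -> exists e : R, (0 < e)%R /\ (forall y, d x y < e%:E -> A y).

Definition is_sigma_algebra (T : Type) (G : set T -> Prop) : Prop :=
  [/\ G set0, (forall A, G A -> G (~` A)) &
      (forall F : nat -> set T, (forall n, G (F n)) -> G (\bigcup_n F n))].

Definition eborel (T : Type) (d : T -> T -> \bar R) (A : set T) : Prop :=
  forall G, is_sigma_algebra G -> (forall O, eopen d O -> G O) -> G A.

Definition is_emetric (T : Type) (d : T -> T -> \bar R) : Prop :=
  [/\ (forall x y, 0 <= d x y), (forall x, d x x = 0),
      (forall x y, d x y = 0 -> x = y), (forall x y, d x y = d y x) &
      (forall x y z, d x z <= d x y + d y z)].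

Definition is_complete (T : Type) (d : T -> T -> \bar R) : Prop :=
  forall u : nat -> T,
    (forall e : R, (0 < e)%R -> exists N, forall m n, (N <= m)%N -> (N <= n)%N ->
        d (u m) (u n) < e%:E) ->
    exists x, forall e : R, (0 < e)%R -> exists N, forall n, (N <= n)%N ->
        d (u n) x < e%:E.

Definition is_separable (T : Type) (d : T -> T -> \bar R) : Prop :=
  exists s : nat -> T, forall x (e : R), (0 < e)%R -> exists n, d x (s n) < e%:E.

Definition is_borel_prob (T : Type) (d : T -> T -> \bar R) (mu : set T -> \bar R) :=
  [/\ mu set0 = 0, (forall A, eborel d A -> 0 <= mu A),
      (forall F : nat -> set T, (forall n, eborel d (F n)) ->
         (forall i j, i <> j -> F i `&` F j = set0) ->
         (fun n => \sum_(0 <= i < n) mu (F i)) @ \oo --> mu (\bigcup_n F n)) &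
      mu setT = 1].

Definition ext_mm_space (X : mmdata R) : Prop :=
  [/\ is_emetric (@mdist R X), is_complete (@mdist R X), is_separable (@mdist R X) &
      is_borel_prob (@mdist R X) (@mmeas R X)].

Definition mm_space (X : mmdata R) : Prop :=
  ext_mm_space X /\ (forall x y : mcar X, mdist x y < +oo).

Definition msupp (X : mmdata R) : set (mcar X) :=
  [set x | forall e : R, (0 < e)%R -> 0 < @mmeas R X [set y | mdist x y < e%:E]].
Arguments msupp : clear implicits.

Definition mm_iso (X Y : mmdata R) : Prop :=
  exists f : mcar X -> mcar Y,
    [/\ (forall x, msupp X x -> msupp Y (f x)),
        (forall x x', msupp X x -> msupp X x' -> mdist (f x) (f x') = mdist x x'),
        (forall y, msupp Y y -> exists2 x, msupp X x & f x = y) &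
        (forall B, eborel (@mdist R Y) B -> @mmeas R Y B = @mmeas R X (msupp X `&` f @^-1` B))].

(* index sets: N : option nat, None standing for infinity;
   [N] = {1,...,N}, [infinity] = {1,2,...} *)
Definition nidx (N : option nat) (n : nat) : bool :=
  match N with Some k => (1 <= n <= k)%N | None => (1 <= n)%N end.

Local Close Scope ereal_scope.
Definition inA1 (N : option nat) (a : nat -> R) : Prop :=
  (forall n, nidx N n -> (0 < a n <= 1)%R)%R /\
  match N with
  | Some k => (\sum_(1 <= n < k.+1) a n)%R = 1%R
  | None => (fun m => (\sum_(1 <= n < m.+1) a n)%R) @ \oo --> (1 : R)
  end.

Local Open Scope ereal_scope.
Section DirectSum.
Variables (N : option nat) (a : nat -> R) (Xs : nat -> mmdata R).

Definition dsum_car : Type := {i : {n : nat | nidx N n} & mcar (Xs (val i))}.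

Definition dsum_dist (p q : dsum_car) : \bar R :=
  match eq_comparable (val (projT1 p)) (val (projT1 q)) with
  | left e => mdist (eq_rect _ (fun k => mcar (Xs k)) (projT2 p) _ e) (projT2 q)
  | right _ => +oo
  end.

Definition dsum_slice (A : set dsum_car) (n : nat) : set (mcar (Xs n)) :=
  [set x : mcar (Xs n) | exists h : nidx N n,
     A (existT (fun i : {k : nat | nidx N k} => mcar (Xs (val i))) (exist _ n h) x)].

Definition dsum_meas (A : set dsum_car) : \bar R :=
  \sum_(n <oo | nidx N n) ((a n)%:E * @mmeas R (Xs n) (@dsum_slice A n)).

Definition dsum : mmdata R := Space dsum_dist dsum_meas.
End DirectSum.

End Defs.

(* Main.v *)
From Pilot Require Import Defs.
From mathcomp Require Import all_boot all_order all_algebra.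
From mathcomp Require Import all_classical all_reals all_analysis.
From Stdlib Require Import ClassicalEpsilon Eqdep_dec.
Import Pilot.Defs.
Set Implicit Arguments. Unset Strict Implicit. Unset Printing Implicit Defensive.
Import Order.TTheory GRing.Theory Num.Theory.
Import numFieldNormedType.Exports.
Local Open Scope classical_set_scope.
Local Open Scope ring_scope.
Section Borel.
Variables (R : realType) (T : Type) (d : T -> T -> \bar R).
Local Open Scope ereal_scope.

Lemma eborel_open A : eopen d A -> eborel d A.
Proof. by move=> oA G _ HG; apply: HG. Qed.
Lemma eborel0 : eborel d set0.
Proof. move=> G sG _; rewrite /is_sigma_algebra in sG; by case: sG. Qed.
Lemma eborelC A : eborel d A -> eborel d (~` A).
Proof. by move=> hA G sG HG; case: (sG) => _ hC _; apply: hC; apply: hA. Qed.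
Lemma eborel_bigcup (F : nat -> set T) :
  (forall n, eborel d (F n)) -> eborel d (\bigcup_n F n).
Proof. move=> hF G sG HG; case: (sG) => _ _ hU; apply: hU => n; exact: hF. Qed.
Lemma eborelT : eborel d setT.
Proof. rewrite -setC0; apply: eborelC; exact: eborel0. Qed.
Lemma eborelU A B : eborel d A -> eborel d B -> eborel d (A `|` B).
Proof.
move=> hA hB. have -> : A `|` B = \bigcup_n (if n == 0%N then A else B).
  apply/seteqP; split=> x.
    by case=> h; [exists 0%N | exists 1%N].
  by case=> -[|n] _ /= h; [left|right].
by apply: eborel_bigcup => -[|n].
Qed.
Lemma eborelI A B : eborel d A -> eborel d B -> eborel d (A `&` B).
Proof.
move=> hA hB; rewrite -[A `&` B]setCK setCI.
by apply: eborelC; apply: eborelU; apply: eborelC.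
Qed.
Lemma eborelD A B : eborel d A -> eborel d B -> eborel d (A `\` B).
Proof. by move=> hA hB; rewrite setDE; apply: eborelI => //; apply: eborelC. Qed.
Lemma eborel_bigsetU (F : nat -> set T) n :
  (forall k, eborel d (F k)) -> eborel d (\big[setU/set0]_(k < n) F k).
Proof.
move=> hF; elim: n => [|n IH]; first by rewrite big_ord0; exact: eborel0.
by rewrite big_ord_recr /=; apply: eborelU.
Qed.
End Borel.

Section Meas.
Variables (R : realType) (T : Type) (d : T -> T -> \bar R) (mu : set T -> \bar R).
Hypothesis Hmu : is_borel_prob d mu.
Local Open Scope ereal_scope.

Lemma mu0 : mu set0 = 0. Proof. by case: Hmu. Qed.
Lemma muT : mu setT = 1. Proof. by case: Hmu. Qed.
Lemma mu_ge0 A : eborel d A -> 0 <= mu A. Proof. by case: Hmu => _ h _ _; apply: h. Qed.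
Lemma mu_sigma (F : nat -> set T) : (forall n, eborel d (F n)) ->
  (forall i j, i <> j -> F i `&` F j = set0) ->
  (fun n => \sum_(0 <= i < n) mu (F i)) @ \oo --> mu (\bigcup_n F n).
Proof. by case: Hmu => _ _ h _; apply: h. Qed.

Lemma mu_series (F : nat -> set T) : (forall n, eborel d (F n)) ->
  (forall i j, i <> j -> F i `&` F j = set0) ->
  \sum_(i <oo) mu (F i) = mu (\bigcup_n F n).
Proof. by move=> h1 h2; apply: (cvg_lim (@ereal_hausdorff R)); apply: mu_sigma. Qed.

Lemma muU A B : eborel d A -> eborel d B -> A `&` B = set0 ->
  mu (A `|` B) = mu A + mu B.
Proof.
move=> hA hB hAB.
pose F n := if n == 0%N then A else if n == 1%N then B else set0.
have hU : \bigcup_n F n = A `|` B.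
  apply/seteqP; split=> x.
    by case=> -[|[|n]] _ /= h; [left|right|].
  by case=> h; [exists 0%N | exists 1%N].
have hF : forall n, eborel d (F n).
  by move=> [|[|n]] //=; exact: eborel0.
have hD : forall i j, i <> j -> F i `&` F j = set0.
  move=> [|[|i]] [|[|j]] //= _; rewrite ?set0I ?setI0 // setIC //.
have := mu_sigma hF hD; rewrite hU => /(cvg_lim (@ereal_hausdorff R)) <-.
apply: (lim_near_cst (@ereal_hausdorff R)).
exists 2%N => // -[|[|n]] //= _.
rewrite big_nat_recl // big_nat_recl // big1 ?adde0 //.
by move=> i _; rewrite /F /=; exact: mu0.
Qed.

Lemma mu_le A B : eborel d A -> eborel d B -> A `<=` B -> mu A <= mu B.
Proof.
move=> hA hB AB.
have -> : B = A `|` (B `\` A) by rewrite setDUK.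
have hBA : eborel d (B `\` A) by apply: eborelD.
rewrite muU //; first by apply: leeDl; apply: mu_ge0.
by rewrite setDE setICA setICr setI0.
Qed.

Lemma mu_null_bigcup (F : nat -> set T) : (forall n, eborel d (F n)) ->
  (forall n, mu (F n) = 0) -> mu (\bigcup_n F n) = 0.
Proof.
move=> hF h0.
have hG : forall n, eborel d (seqDU F n).
  move=> n; rewrite /seqDU; apply: eborelD => //; exact: eborel_bigsetU.
have hG0 : forall n, mu (seqDU F n) = 0.
  move=> n; apply/eqP; rewrite eq_le; rewrite mu_ge0 // andbT -(h0 n).
  by apply: mu_le => //; exact: subset_seqDU.
rewrite seqDU_bigcup_eq -mu_series //.
  by rewrite eseries0.
move=> i j ij; apply/eqP/negPn/negP => /set0P ne.
by apply: ij; apply: (@trivIset_seqDU _ F i j).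
Qed.
End Meas.
Section Supp.
Variables (R : realType) (T : Type) (d : T -> T -> \bar R) (mu : set T -> \bar R).
Hypothesis Hd : is_emetric d.
Local Open Scope ereal_scope.

Definition eball (x : T) (e : R) := [set y | d x y < e%:E].
Definition esupp := [set x | forall e : R, (0 < e)%R -> 0 < mu (eball x e)].

Lemma d_ge0 x y : 0 <= d x y. Proof. by case: Hd => h _ _ _ _; apply: h. Qed.
Lemma d_xx x : d x x = 0. Proof. by case: Hd. Qed.
Lemma d_eq x y : d x y = 0 -> x = y. Proof. by case: Hd => _ _ h _ _; apply: h. Qed.
Lemma d_sym x y : d x y = d y x. Proof. by case: Hd => _ _ _ h _; apply: h. Qed.
Lemma d_tri x y z : d x z <= d x y + d y z. Proof. by case: Hd => _ _ _ _ h; apply: h. Qed.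

Lemma dist_fin x y (e : R) : d x y < e%:E ->
  exists r : R, [/\ d x y = r%:E, (0 <= r)%R & (r < e)%R].
Proof.
have := d_ge0 x y; case: (d x y) => [r| |] //= h1 h2.
by exists r; split => //; rewrite -lee_fin // -lte_fin.
Qed.

Lemma tri_lt x y z (a b : R) : d x y < a%:E -> d y z < b%:E -> d x z < (a + b)%:E.
Proof. by move=> h1 h2; apply: (le_lt_trans (d_tri x y z)); rewrite EFinD; apply: lteD. Qed.

Lemma ball_sub x y (e : R) : d x y < e%:E ->
  exists2 e' : R, (0 < e')%R & eball y e' `<=` eball x e.
Proof.
move=> /dist_fin [r [hr r0 re]]; exists (e - r)%R; first by rewrite subr_gt0.
move=> z; rewrite /eball /= => hz.
apply: (le_lt_trans (d_tri x y z)); rewrite hr.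
have -> : e = (r + (e - r))%R by rewrite addrC subrK.
by rewrite EFinD lteD2lE.
Qed.

Lemma ball_open x e : eopen d (eball x e).
Proof. by move=> y /ball_sub [e' e'0 h]; exists e'; split => // z hz; apply: h. Qed.

Lemma ball_borel x e : eborel d (eball x e).
Proof. apply: eborel_open; exact: ball_open. Qed.

Hypothesis Hmu : is_borel_prob d mu.

Lemma supp_C x : ~ esupp x -> exists2 e : R, (0 < e)%R & mu (eball x e) = 0.
Proof.
move=> /existsNP [e] /not_implyP [e0 he]; exists e => //.
apply/eqP; rewrite eq_le (mu_ge0 Hmu) ?andbT //; last exact: ball_borel.
by rewrite leNgt; apply/negP.
Qed.

Lemma suppC_open : eopen d (~` esupp).
Proof.
move=> x /supp_C [e e0 he]; exists (e / 2)%R; split; first by rewrite divr_gt0.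
move=> y hy hs.
have : 0 < mu (eball y (e / 2)) by apply: hs; rewrite divr_gt0.
rewrite lt_neqAle => /andP [/eqP h _]; apply: h.
apply/eqP; rewrite eq_le (mu_ge0 Hmu) ?andbT //; last exact: ball_borel.
rewrite -he; apply: (mu_le Hmu) => //; try exact: ball_borel.
move=> z; rewrite /eball /= => hz.
by have := tri_lt hy hz; rewrite -splitr.
Qed.

Lemma supp_borel : eborel d esupp.
Proof. by rewrite -[esupp]setCK; apply: eborelC; apply: eborel_open; exact: suppC_open. Qed.

Hypothesis Hsep : is_separable d.

Lemma mu_suppC : mu (~` esupp) = 0.
Proof.
case: Hsep => s hs.
pose r (j : nat) : R := ((j.+1)%:R^-1)%R.
have r0 j : (0 < r j)%R by rewrite /r invr_gt0.
pose E k j := [set y | mu (eball (s k) (r j)) = 0 /\ d (s k) y < (r j)%:E].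
have Eo k j : eborel d (E k j).
  apply: eborel_open => y [h1 h2].
  have [e' e'0 he'] := ball_sub h2.
  by exists e'; split => // z hz; split => //; apply: he'.
have -> : ~` esupp = \bigcup_k \bigcup_j E k j.
  apply/seteqP; split => x.
    move=> /supp_C [e e0 he].
    pose j := Num.Def.trunc (2 / e)%R.
    have hj : (r j < e / 2)%R.
      rewrite /r invf_plt ?posrE //; last by rewrite divr_gt0.
      by rewrite invf_div; apply: truncnS_gt.
    have [k hk] := hs x (r j) (r0 j).
    exists k => //; exists j => //; split; last by rewrite d_sym.
    apply/eqP; rewrite eq_le (mu_ge0 Hmu) ?andbT //; last exact: ball_borel.
    rewrite -he; apply: (mu_le Hmu) => //; try exact: ball_borel.
    move=> z; rewrite /eball /= => hz.
    apply: (lt_trans (tri_lt hk hz)); rewrite lte_fin.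
    by rewrite [X in (_ < X)%R](splitr e); apply: ltrD.
  move=> [k _ [j _ [h1 h2]]] hx.
  have [e' e'0 he'] := ball_sub h2.
  have := hx e' e'0; rewrite lt_neqAle => /andP [/eqP h _]; apply: h.
  apply/eqP; rewrite eq_le (mu_ge0 Hmu) ?andbT //; last exact: ball_borel.
  by rewrite -h1; apply: (mu_le Hmu) => //; exact: ball_borel.
apply: (mu_null_bigcup Hmu) => //.
  by move=> k; apply: eborel_bigcup.
move=> k; apply: (mu_null_bigcup Hmu) => // j.
case: (pselect (mu (eball (s k) (r j)) = 0)) => [h|h].
  apply/eqP; rewrite eq_le (mu_ge0 Hmu) // andbT -h; apply: (mu_le Hmu) => //.
    exact: ball_borel.
  by move=> y [].
have -> : E k j = set0 by apply/seteqP; split => y // [].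
exact: (mu0 Hmu).
Qed.

Lemma mu_Isupp A : eborel d A -> mu (A `&` esupp) = mu A.
Proof.
move=> hA.
have hs := supp_borel.
have hsc : eborel d (~` esupp) by apply: eborelC.
have h1 : eborel d (A `&` esupp) by apply: eborelI.
have h2 : eborel d (A `&` ~` esupp) by apply: eborelI.
rewrite -{2}[A]setIT -(setUv esupp) setIUr (muU Hmu) //; last first.
  by rewrite setIACA setIid setICr setI0.
rewrite [X in _ + X](_ : _ = 0) ?adde0 //.
apply/eqP; rewrite eq_le (mu_ge0 Hmu) ?andbT //.
rewrite -mu_suppC; apply: (mu_le Hmu) => // z [].
Qed.

Lemma mu_supp : mu esupp = 1.
Proof. by have := mu_Isupp (@eborelT R T d); rewrite setTI => ->; exact: (muT Hmu). Qed.



Lemma supp_n0 : exists x, esupp x.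
Proof.
apply: NNPP => h.
have : esupp = set0 by apply/seteqP; split => // x hx; apply: h; exists x.
by move=> e; have := mu_supp; rewrite e (mu0 Hmu) => /(congr1 fine) /= /eqP; rewrite eq_sym oner_eq0.
Qed.
End Supp.

Lemma series_single (R : realType) (f : nat -> \bar R) (P : pred nat) n : P n ->
  (forall k, P k -> k != n -> f k = 0%E) -> (\sum_(k <oo | P k) f k)%E = f n.
Proof.
move=> Pn h; apply: (lim_near_cst (@ereal_hausdorff R)).
exists n.+1 => // m /= hm.
rewrite big_mkcond /= (bigD1_seq n) ?mem_index_iota ?iota_uniq //= Pn big1 ?adde0 //.
by move=> k kn; case: ifP => // Pk; apply: h.
Qed.

Section DSum.
Variables (R : realType) (N : option nat) (a : nat -> R) (Xs : nat -> mmdata R).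
Local Open Scope ereal_scope.

Definition dinj n (h : nidx N n) (x : mcar (Xs n)) : dsum_car N Xs :=
  existT (fun i : {k : nat | nidx N k} => mcar (Xs (val i))) (exist _ n h) x.

Lemma dinj_h n h h' x : @dinj n h x = @dinj n h' x.
Proof. by rewrite (bool_irrelevance h h'). Qed.

Lemma dcase (p : dsum_car N Xs) : exists n h x, p = @dinj n h x.
Proof. by case: p => -[n h] x; exists n, h, x. Qed.

Lemma dinj_idx n m h h' x y : @dinj n h x = @dinj m h' y -> n = m.
Proof. by move=> /(congr1 (fun p => val (projT1 p))). Qed.

Lemma dinj_inj n h h' x y : @dinj n h x = @dinj n h' y -> x = y.
Proof.
rewrite (bool_irrelevance h' h) /dinj => e.
apply: (inj_pair2_eq_dec _ _ _ _ _ _ e) => u v; case: (pselect (u = v)); [left|right]; done.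
Qed.

Lemma dist_same n h h' x y : dsum_dist (@dinj n h x) (@dinj n h' y) = mdist x y.
Proof.
rewrite /dsum_dist /=; case: eq_comparable => //= e.
by rewrite (eq_irrelevance e (erefl n)).
Qed.

Lemma dist_diff n m h h' x y : n <> m -> dsum_dist (@dinj n h x) (@dinj m h' y) = +oo.
Proof. by move=> nm; rewrite /dsum_dist /=; case: eq_comparable. Qed.

Definition demb n (A : set (mcar (Xs n))) : set (dsum_car N Xs) :=
  [set p | exists h x, A x /\ p = @dinj n h x].

Lemma slice_same n (A : set (mcar (Xs n))) : nidx N n -> dsum_slice (demb A) (n:=n) = A.
Proof.
move=> hn; apply/seteqP; split => x.
  by case=> h [h' [y [Ay /dinj_inj ->]]].
by move=> Ax; exists hn, hn, x.
Qed.

Lemma slice_diff n m (A : set (mcar (Xs n))) : m <> n -> dsum_slice (demb A) (n:=m) = set0.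
Proof.
move=> mn; apply/seteqP; split => x //.
by case=> h [h' [y [_ /dinj_idx e]]].
Qed.

Hypothesis HX : forall n, nidx N n -> mm_space (Xs n).

Lemma meas_demb n (A : set (mcar (Xs n))) : nidx N n ->
  dsum_meas a (demb A) = (a n)%:E * mmeas A.
Proof.
move=> hn; rewrite /dsum_meas (@series_single R _ (nidx N) n hn) ?slice_same //.
move=> k hk /eqP kn; rewrite slice_diff //.
by have [[_ _ _ [h0 _ _ _]] _] := HX hk; rewrite h0 mule0.
Qed.

Hypothesis HA : inA1 N a.

Lemma a_gt0 n : nidx N n -> (0 < a n)%R.
Proof. by case: HA => h _ hn; case/andP: (h n hn). Qed.

Lemma ball_demb n h x (e : R) :
  [set q | dsum_dist (@dinj n h x) q < e%:E] = demb [set y | mdist x y < e%:E].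
Proof.
apply/seteqP; split => q.
  have [m [h' [y ->]]] := dcase q; rewrite /=.
  case: (eqVneq m n) => [e1|mn].
    subst m; rewrite dist_same => hy; exists h', y; split => //.
  by rewrite dist_diff //; apply/eqP; rewrite eq_sym.
by case=> h' [y [hy ->]]; rewrite /= dist_same.
Qed.

Lemma supp_dinj n h x : @msupp R (dsum N a Xs) (@dinj n h x) <-> @msupp R (Xs n) x.
Proof.
split => hs e e0; have := hs e e0; rewrite /= ?ball_demb meas_demb //;
  by rewrite pmule_rgt0 // lte_fin a_gt0.
Qed.

Lemma piece_open n : eopen (@dsum_dist R N Xs) (demb (n:=n) setT).
Proof.
move=> q [h [x [_ ->]]]; exists 1%R; split => // q'.
move=> hq; have : demb [set y | mdist x y < 1%:E] q' by rewrite -ball_demb.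
by case=> h' [y [_ ->]]; exists h', y.
Qed.

Lemma borel_demb n (A : set (mcar (Xs n))) : nidx N n ->
  eborel (@mdist R (Xs n)) A -> eborel (@dsum_dist R N Xs) (demb A).
Proof.
move=> hn hA.
pose G := fun B : set (mcar (Xs n)) => eborel (@dsum_dist R N Xs) (demb B).
apply: (hA G).
  split.
  - rewrite /G (_ : demb set0 = set0); first exact: eborel0.
    by apply/seteqP; split => q // [h [x [[] _]]].
  - move=> B hB; rewrite /G (_ : demb (~` B) = demb (n:=n) setT `\` demb B).
      by apply: eborelD => //; apply: eborel_open; exact: piece_open.
    apply/seteqP; split => q.
      case=> h [x [nB ->]]; split; first by exists h, x.
      by case=> h' [y [By /dinj_inj e]]; apply: nB; rewrite e.
    case=> -[h [x [_ ->]]] nq; exists h, x; split => // Bx.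
    by apply: nq; exists h, x.
  - move=> F hF; rewrite /G (_ : demb (\bigcup_k F k) = \bigcup_k demb (F k)).
      exact: eborel_bigcup.
    apply/seteqP; split => q.
      by case=> h [x [[k _ Fx] ->]]; exists k => //; exists h, x.
    by case=> k _ [h [x [Fx ->]]]; exists h, x; split => //; exists k.
move=> O hO; apply: eborel_open => q [h [x [Ox ->]]].
have [e [e0 he]] := hO x Ox; exists e; split => // q'.
move=> hq; have : demb [set y | mdist x y < e%:E] q' by rewrite -ball_demb.
by case=> h' [y [hy ->]]; exists h', y; split => //; apply: he.
Qed.
End DSum.

Lemma idx_bij (N M : option nat) (phi : nat -> nat) :
  (forall n, nidx N n -> nidx M (phi n)) ->
  (forall n m, nidx N n -> nidx N m -> phi n = phi m -> n = m) ->
  (forall m, nidx M m -> exists2 n, nidx N n & phi n = m) -> N = M.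
Proof.
move=> hf hi hs.
have memI k i : (i \in iota 1 k) = nidx (Some k) i by rewrite mem_iota /= add1n ltnS.
have uniqm k : nidx N =1 nidx (Some k) -> uniq (map phi (iota 1 k)).
  move=> eN; rewrite map_inj_in_uniq ?iota_uniq // => i j.
  by rewrite !memI -!eN; apply: hi.
case: N M hf hi hs uniqm => [n|] [m|] hf hi hs uniqm //.
- have u := uniqm n (fun _ => erefl).
  have h1 : (n <= m)%N.
    have hsub : {subset map phi (iota 1 n) <= iota 1 m}.
      move=> _ /mapP [i hi' ->]; rewrite memI; apply: hf; by rewrite -memI.
    by have := uniq_leq_size u hsub; rewrite size_map !size_iota.
  have h2 : (m <= n)%N.
    have hsub : {subset iota 1 m <= map phi (iota 1 n)}.
      move=> j; rewrite memI => /hs [i hi' <-]; apply: map_f; by rewrite memI.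
    by have := uniq_leq_size (iota_uniq 1 m) hsub; rewrite size_map !size_iota.
  by congr Some; apply/eqP; rewrite eqn_leq h1 h2.
- exfalso; have := uniq_leq_size (iota_uniq 1 n.+1).
  have : {subset iota 1 n.+1 <= map phi (iota 1 n)}.
    move=> j; rewrite memI => hj.
    have [i hi' <-] := hs j (andP hj).1; apply: map_f; by rewrite memI.
  by move=> hsub /(_ _ hsub); rewrite size_map !size_iota ltnn.
- exfalso.
  have u : uniq (map phi (iota 1 m.+1)).
    rewrite map_inj_in_uniq ?iota_uniq // => i j.
    rewrite !memI => /andP [hi1 _] /andP [hj1 _]; apply: hi => //.
  have := uniq_leq_size u.
  have : {subset map phi (iota 1 m.+1) <= iota 1 m}.
    move=> _ /mapP [i hi' ->]; rewrite memI; apply: hf.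
    by move: hi'; rewrite memI => /andP [].
  by move=> hsub /(_ _ hsub); rewrite size_map !size_iota ltnn.
Qed.

Section MM.
Variables (R : realType) (X : mmdata R).
Hypothesis HX : mm_space X.
Lemma mm_em : is_emetric (@mdist R X). Proof. by case: HX => -[]. Qed.
Lemma mm_bp : is_borel_prob (@mdist R X) (@mmeas R X). Proof. by case: HX => -[]. Qed.
Lemma mm_sep : is_separable (@mdist R X). Proof. by case: HX => -[]. Qed.
Lemma mm_fin (x y : mcar X) : (mdist x y < +oo)%E. Proof. by case: HX => _; apply. Qed.
Lemma mm_supp_n0 : exists x, @msupp R X x.
Proof. exact: (supp_n0 mm_em mm_bp mm_sep). Qed.
Lemma mm_mu_supp : @mmeas R X (@msupp R X) = 1%E.
Proof. exact: (mu_supp mm_em mm_bp mm_sep). Qed.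
End MM.

Lemma mulE_cancel (R : realType) (c : R) (x y : \bar R) : c != 0 ->
  (c%:E * x = c%:E * y)%E -> x = y.
Proof.
move=> c0 e; have := congr1 (fun z => ((c^-1)%:E * z)%E) e.
by rewrite /= !muleA -!EFinM mulVf // !mul1e.
Qed.

Lemma dsum_fin (R : realType) (N : option nat) (Xs : nat -> mmdata R)
  (HX : forall n, nidx N n -> mm_space (Xs n)) n m (h : nidx N n) (h' : nidx N m)
  (x : mcar (Xs n)) (y : mcar (Xs m)) : n = m -> (dsum_dist (dinj h x) (dinj h' y) < +oo)%E.
Proof. move=> e; subst m; rewrite dist_same; exact: (mm_fin (HX n h)). Qed.

Theorem part2 (R : realType) (N M : option nat) (a b : nat -> R) (Xs Ys : nat -> mmdata R) :
  inA1 N a -> inA1 M b ->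
  (forall n, nidx N n -> mm_space (Xs n)) ->
  (forall m, nidx M m -> mm_space (Ys m)) ->
  mm_iso (dsum N a Xs) (dsum M b Ys) ->
  N = M /\
  exists phi : nat -> nat,
    [/\ (forall n, nidx N n -> nidx N (phi n)),
        (forall n m, nidx N n -> nidx N m -> phi n = phi m -> n = m),
        (forall m, nidx N m -> exists2 n, nidx N n & phi n = m) &
        (forall n, nidx N n -> a n = b (phi n) /\ mm_iso (Xs n) (Ys (phi n)))].
Proof.
move=> HA HB HX HY [f [fs fd fsurj fm]].
pose Q n m := exists (h : nidx N n) (x : mcar (Xs n)) (hm : nidx M m) (y : mcar (Ys m)),
   @msupp R (Xs n) x /\ f (dinj h x) = dinj hm y.
pose phi n := epsilon (inhabits 0%N) (Q n).
have hQ : forall n, nidx N n -> Q n (phi n).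
  move=> n hn; apply: epsilon_spec.
  have [x hx] := mm_supp_n0 (HX n hn).
  have [m [hm [y e]]] := dcase (f (dinj hn x)).
  by exists m, hn, x, hm, y.
have hphiM : forall n, nidx N n -> nidx M (phi n).
  by move=> n hn; have [_ [_ [hm _]]] := hQ n hn.
have K : forall n (h : nidx N n) x, @msupp R (Xs n) x ->
    exists hm y, f (dinj h x) = @dinj R M Ys (phi n) hm y.
  move=> n h x hx.
  have [h0 [x0 [hm0 [y0 [hx0 e0]]]]] := hQ n h.
  have [m [hm [y e]]] := dcase (f (dinj h x)).
  case: (eqVneq m (phi n)) => [em|nm].
    by subst m; exists hm, y.
  exfalso.
  have := fd _ _ ((supp_dinj HX HA h x).2 hx) ((supp_dinj HX HA h0 x0).2 hx0).
  rewrite e e0 /= dist_diff; last exact/eqP.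
  rewrite dist_same => ho.
  by have := mm_fin (HX n h) x x0; rewrite -ho ltxx.
have hinj : forall n n', nidx N n -> nidx N n' -> phi n = phi n' -> n = n'.
  move=> n n' hn hn' e.
  have [x hx] := mm_supp_n0 (HX n hn).
  have [x' hx'] := mm_supp_n0 (HX n' hn').
  have [hm [y ey]] := K n hn x hx.
  have [hm' [y' ey']] := K n' hn' x' hx'.
  case: (eqVneq n n') => // nn'; exfalso.
  have := fd _ _ ((supp_dinj HX HA hn x).2 hx) ((supp_dinj HX HA hn' x').2 hx').
  rewrite ey ey' /= => ed.
  have := dsum_fin HY hm hm' y y' e; rewrite ed dist_diff ?ltxx //; exact/eqP.
have hsurj : forall m, nidx M m -> exists2 n, nidx N n & phi n = m.
  move=> m hm.
  have [y hy] := mm_supp_n0 (HY m hm).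
  have [p hp ep] := fsurj _ ((supp_dinj HY HB hm y).2 hy).
  have [n [hn [x ex]]] := dcase p; subst p.
  have hx := (supp_dinj HX HA hn x).1 hp.
  have [hm' [y' ey']] := K n hn x hx.
  exists n => //; rewrite ey' in ep; exact: (dinj_idx ep).
have eNM := idx_bij hphiM hinj hsurj.
subst M; split => //; exists phi; split => //.
move=> n hn.
have hpn := hphiM n hn.
have [y0 _] := mm_supp_n0 (HY _ hpn).
pose g := fun x : mcar (Xs n) => epsilon (inhabits y0)
   (fun y => exists hn' hm', f (dinj hn' x) = @dinj R N Ys (phi n) hm' y).
have G : forall x (h : nidx N n) (hm : nidx N (phi n)), @msupp R (Xs n) x ->
    f (dinj h x) = dinj hm (g x).
  move=> x h hm hx.
  have [hm1 [y1 e1]] := K n h x hx.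
  have : exists y, exists hn' hm', f (dinj hn' x) = @dinj R N Ys (phi n) hm' y.
    by exists y1, h, hm1.
  move=> /(epsilon_spec (inhabits y0)) [hn' [hm' e]].
  by rewrite (dinj_h h hn') e; apply: dinj_h.
have SE : forall B : set (mcar (Ys (phi n))),
   @msupp R (dsum N a Xs) `&` f @^-1` (@demb R N Ys (phi n) B) =
   @demb R N Xs n (@msupp R (Xs n) `&` g @^-1` B).
  move=> B; apply/seteqP; split => q.
    case=> hq [hm [y [By efq]]].
    have [n' [hn' [x ex]]] := dcase q; subst q.
    have hx := (supp_dinj HX HA hn' x).1 hq.
    have [hm1 [y1 e1]] := K n' hn' x hx.
    have en : n' = n.
      by apply: hinj => //; rewrite e1 in efq; exact: (dinj_idx efq).
    subst n'.
    exists hn', x; split => //; split => //.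
    by have := G x hn' hm hx; rewrite efq => /dinj_inj e; rewrite /preimage /= -e.
  case=> h [x [[hx Bgx] ->]]; split; first exact: (supp_dinj HX HA h x).2.
  by exists hpn, (g x); split => //; rewrite (G x h hpn hx).
have ME : forall B, eborel (@mdist R (Ys (phi n))) B ->
   ((b (phi n))%:E * mmeas B = (a n)%:E * mmeas (@msupp R (Xs n) `&` g @^-1` B))%E.
  move=> B hB.
  rewrite -(meas_demb b HY B hpn) -(meas_demb a HX _ hn) -SE.
  exact: (fm (@demb R N Ys (phi n) B) (borel_demb hpn hB)).
have eab : a n = b (phi n).
  have := ME setT (@eborelT R _ (@mdist R (Ys (phi n)))).
  rewrite preimage_setT setIT (muT (mm_bp (HY _ hpn))) (mm_mu_supp (HX _ hn)) !mule1.
  by move=> [->].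
split => //; exists g; split.
- move=> x hx; have := fs _ ((supp_dinj HX HA hn x).2 hx).
  by rewrite (G x hn hpn hx) => /(supp_dinj HY HB hpn (g x)).
- move=> x x' hx hx'.
  have := fd _ _ ((supp_dinj HX HA hn x).2 hx) ((supp_dinj HX HA hn x').2 hx').
  by rewrite (G x hn hpn hx) (G x' hn hpn hx') /= !dist_same.
- move=> y hy.
  have [p hp ep] := fsurj _ ((supp_dinj HY HB hpn y).2 hy).
  have [n' [hn' [x ex]]] := dcase p; subst p.
  have hx := (supp_dinj HX HA hn' x).1 hp.
  have [hm1 [y1 e1]] := K n' hn' x hx.
  have en : n' = n.
    by apply: hinj => //; rewrite e1 in ep; exact: (dinj_idx ep).
  subst n'; exists x => //.
  by have := G x hn' hpn hx; rewrite ep => /dinj_inj ->.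
- move=> B hB; apply: (@mulE_cancel R (b (phi n))).
    by rewrite gt_eqF // (a_gt0 HB hpn).
  by rewrite ME // eab.
Qed.

Definition sub_mm (R : realType) (X : mmdata R) (C : set (mcar X)) (c : R) : mmdata R :=
  @Space R {x : mcar X | C x} (fun p q => mdist (proj1_sig p) (proj1_sig q))
    (fun A => ((c^-1)%:E * mmeas [set proj1_sig p | p in A])%E).

Section Sub.
Variables (R : realType) (X : mmdata R).
Hypothesis HX : ext_mm_space X.
Local Notation d := (@mdist R X).
Local Notation mu := (@mmeas R X).
Local Open Scope ereal_scope.

Let Hd : is_emetric d. Proof. by case: HX. Qed.
Let Hc : is_complete d. Proof. by case: HX. Qed.
Let Hsep : is_separable d. Proof. by case: HX. Qed.
Let Hmu : is_borel_prob d mu. Proof. by case: HX. Qed.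

Definition cls (x : mcar X) := [set y | d x y < +oo].

Lemma cls_self x : cls x x. Proof. by rewrite /cls /= d_xx. Qed.
Lemma cls_sym x y : cls x y -> cls y x. Proof. by rewrite /cls /= d_sym. Qed.
Lemma cls_trans x y z : cls x y -> cls y z -> cls x z.
Proof. by move=> h1 h2; apply: (le_lt_trans (d_tri Hd x y z)); apply: lte_add_pinfty. Qed.
Lemma cls_eq x y : cls x y -> cls x = cls y.
Proof.
move=> h; apply/seteqP; split => z hz.
  exact: (cls_trans (cls_sym h)).
exact: (cls_trans h).
Qed.
Lemma cls_open x : eopen d (cls x).
Proof.
move=> y hy; exists 1%R; split => // z hz.
by apply: (cls_trans hy); rewrite /cls /= (lt_trans hz) ?ltry.
Qed.
Lemma cls_borel x : eborel d (cls x).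
Proof. apply: eborel_open; exact: cls_open. Qed.
Lemma cls_pos x : esupp d mu x -> 0 < mu (cls x).
Proof.
move=> hx; apply: (lt_le_trans (hx 1%R ltr01)).
apply: (mu_le Hmu); [exact: ball_borel| exact: cls_borel|].
by move=> z hz; rewrite /cls /= (lt_trans hz) ?ltry.
Qed.
Lemma cls_le1 x : mu (cls x) <= 1.
Proof.
rewrite -(muT Hmu); apply: (mu_le Hmu) => //; [exact: cls_borel| exact: eborelT].
Qed.

Lemma sval_inj (P : mcar X -> Prop) (p q : {x | P x}) : proj1_sig p = proj1_sig q -> p = q.
Proof. by case: p q => x hx [y hy] /= e; subst y; congr exist; apply: Prop_irrelevance. Qed.

Variable x0 : mcar X.
Hypothesis hx0 : esupp d mu x0.
Local Notation C := (cls x0).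
Definition cc := fine (mu C).
Local Notation S := (sub_mm C cc).

Lemma cc_gt0 : (0 < cc)%R.
Proof.
have h1 := cls_pos hx0; have h2 := cls_le1 x0.
rewrite /cc; move: h1 h2; case: (mu C) => [r| |] //=; by rewrite lte_fin.
Qed.
Lemma cc_E : mu C = cc%:E.
Proof.
have h1 := cls_pos hx0; have h2 := cls_le1 x0.
rewrite /cc; move: h1 h2; case: (mu C) => [r| |] //=.
Qed.
Lemma cc_le1 : (cc <= 1)%R.
Proof. by have := cls_le1 x0; rewrite cc_E lee_fin. Qed.

Lemma img_ball (p : mcar S) (e : R) :
  [set proj1_sig q | q in [set q : mcar S | mdist p q < e%:E]] = eball d (proj1_sig p) e.
Proof.
apply/seteqP; split => y.
  by case=> q hq <-.
move=> hy.
have hC : C y.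
  apply: (cls_trans (proj2_sig p)).
  by rewrite /cls /= (lt_trans hy) ?ltry.
by exists (exist _ y hC).
Qed.

Lemma sub_borel (A : set (mcar S)) : eborel (@mdist R S) A ->
  eborel d [set proj1_sig p | p in A].
Proof.
move=> hA.
pose G := fun B : set (mcar S) => eborel d [set proj1_sig p | p in B].
apply: (hA G).
  split.
  - by rewrite /G image_set0; exact: eborel0.
  - move=> B hB; rewrite /G (_ : [set proj1_sig p | p in ~` B] = C `\` [set proj1_sig p | p in B]).
      by apply: eborelD => //; exact: cls_borel.
    apply/seteqP; split => y.
      case=> p nB <-; split; first exact: (proj2_sig p).
      by case=> q Bq /sval_inj e; apply: nB; rewrite -e.
    case=> hC nB; exists (exist _ y hC) => // Bp; apply: nB.
    by exists (exist _ y hC).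
  - move=> F hF; rewrite /G image_bigcup; exact: eborel_bigcup.
move=> O hO; apply: eborel_open => y [p Op <-].
have [e [e0 he]] := hO p Op; exists e; split => // z hz.
have hC : C z.
  apply: (cls_trans (proj2_sig p)).
  by rewrite /cls /= (lt_trans hz) ?ltry.
by exists (exist _ z hC) => //; apply: he.
Qed.

Lemma sub_supp (p : mcar S) : @msupp R S p <-> esupp d mu (proj1_sig p).
Proof.
split => hs e e0; have := hs e e0; rewrite /= ?img_ball;
  by rewrite pmule_rgt0 // lte_fin invr_gt0 cc_gt0.
Qed.

Lemma sub_space : mm_space S.
Proof.
split; last first.
  move=> p q /=; apply: (cls_trans (cls_sym (proj2_sig p))); exact: (proj2_sig q).
split.
- split.
  + by move=> p q; exact: (d_ge0 Hd).
  + by move=> p; exact: (d_xx Hd).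
  + by move=> p q /(d_eq Hd) /sval_inj.
  + by move=> p q; exact: (d_sym Hd).
  + by move=> p q r; exact: (d_tri Hd).
- move=> u hu.
  have [x hx] := @Hc (fun k : nat => proj1_sig (u k)) hu.
  have hC : C x.
    have [N' hN'] := hx 1%R ltr01.
    apply: (cls_trans (proj2_sig (u N'))).
    by rewrite /cls /= (lt_trans (hN' N' (leqnn _))) ?ltry.
  by exists (exist _ x hC).
- case: Hsep => s hs.
  exists (fun k => match pselect (C (s k)) with
                  | left h => exist _ (s k) h
                  | right _ => exist _ x0 (cls_self x0) end).
  move=> p e e0; have [k hk] := hs (proj1_sig p) e e0; exists k.
  case: pselect => // nC; exfalso; apply: nC.
  apply: (cls_trans (proj2_sig p)).
  by rewrite /cls /= (lt_trans hk) ?ltry.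
- have hc : (0 <= cc^-1)%R by rewrite invr_ge0 ltW // cc_gt0.
  split.
  + by rewrite /= image_set0 (mu0 Hmu) mule0.
  + move=> A hA; apply: mule_ge0; first by rewrite lee_fin.
    by apply: (mu_ge0 Hmu); apply: sub_borel.
  + move=> F hF hD /=.
    have -> : (fun n => \sum_(0 <= i < n) ((cc^-1)%:E * mu [set proj1_sig p | p in F i]))
            = (fun n => (cc^-1)%:E * \sum_(0 <= i < n) mu [set proj1_sig p | p in F i]).
      apply/funext => n; rewrite ge0_sume_distrr //.
      by move=> i _; apply: (mu_ge0 Hmu); apply: sub_borel.
    apply: cvgeZl => //.
    rewrite image_bigcup; apply: (mu_sigma Hmu).
      by move=> n; apply: sub_borel.
    move=> i j ij; apply/seteqP; split => // y [[p Fp <-] [q Fq /sval_inj e]].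
    by subst q; have : (F i `&` F j) p by []; rewrite (hD i j ij).
  + rewrite /= (_ : [set proj1_sig p | p in setT] = C).
      by rewrite cc_E -EFinM mulVf // gt_eqF // cc_gt0.
    apply/seteqP; split => y.
      by case=> p _ <-; exact: (proj2_sig p).
    by move=> hC; exists (exist _ y hC).
Qed.
End Sub.
Section Enum.
Local Open Scope card_scope.
Lemma enum_count (T : Type) (K : set (set T)) : countable K ->
  exists (N : option nat) (G : nat -> set T),
    [/\ forall n, nidx N n -> K (G n),
        forall n n', nidx N n -> nidx N n' -> G n = G n' -> n = n' &
        forall C, K C -> exists2 n, nidx N n & G n = C].
Proof.
move=> cK; case: (pselect (finite_set K)) => [[m hm]|inf].
  have : (`I_m #= K) by rewrite card_eq_sym.
  move=> /card_set_bijP [f [ff fi fs]].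
  exists (Some m), (fun n => f n.-1); split.
  - by move=> [|n] //= hn; apply: ff.
  - move=> [|n] [|n'] //= hn hn' e; congr S.
    by apply: fi => //; rewrite inE.
  - move=> C /fs [i hi <-]; exists i.+1 => //.
have := eq_card_nat cK inf; rewrite card_eq_sym => /card_set_bijP [f [ff fi fs]].
exists None, (fun n => f n.-1); split.
- by move=> [|n] //= hn; apply: ff.
- move=> [|n] [|n'] //= hn hn' e; congr S.
  by apply: fi => //; rewrite inE.
- move=> C /fs [i hi <-]; exists i.+1 => //.
Qed.
End Enum.

Lemma inA1_sum (R : realType) (N : option nat) (a : nat -> R) :
  (forall n, ~~ nidx N n -> a n = 0) ->
  (fun m => (\sum_(0 <= i < m) a i)%:E) @ \oo --> (1%:E : \bar R) ->
  match N with
  | Some k => \sum_(1 <= n < k.+1) a n = 1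
  | None => (fun m => \sum_(1 <= n < m.+1) a n) @ \oo --> (1 : R)
  end.
Proof.
move=> hz hcv.
have ha0 : a 0 = 0 by apply: (hz 0); case: (N) hz hcv.
have hsh m : \sum_(1 <= n < m.+1) a n = \sum_(0 <= n < m.+1) a n.
  by rewrite (big_ltn (m := 0)) // ha0 add0r.
case: N hz hcv => [k|] hz hcv.
  rewrite hsh.
  have : (\sum_(0 <= i < k.+1) a i)%:E = (1%:E : \bar R).
    rewrite -(cvg_lim (@ereal_hausdorff R) hcv).
    apply/esym; apply: (lim_near_cst (@ereal_hausdorff R)).
    exists k.+1 => // m /= hm.
    have -> : (\sum_(0 <= i < m) a i = \sum_(0 <= i < k.+1) a i + \sum_(k.+1 <= i < m) a i)%R.
      by rewrite -big_cat_nat.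
    have -> : (\sum_(k.+1 <= i < m) a i = 0)%R.
      rewrite big_nat_cond big1 // => i /andP [/andP [hi _] _]; apply: hz.
      by apply/negP => /andP [_ hik]; rewrite ltnNge hik in hi.
    by rewrite addr0.
  by move=> [].
have h2 : (fun m => (\sum_(0 <= i < m.+1) a i)%:E) @ \oo --> (1%:E : \bar R).
  by rewrite -(cvg_shiftS (fun m => (\sum_(0 <= i < m) a i)%:E)) in hcv.
have -> : (fun m => \sum_(1 <= n < m.+1) a n) = fine \o (fun m => (\sum_(0 <= i < m.+1) a i)%:E).
  by apply/funext => m; rewrite /= hsh.
exact: fine_cvg.
Qed.

Theorem part1 (R : realType) (X : mmdata R) : ext_mm_space X ->
  exists (N : option nat) (a : nat -> R) (Xs : nat -> mmdata R),
    [/\ inA1 N a, (forall n, nidx N n -> mm_space (Xs n)) & mm_iso (dsum N a Xs) X].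
Proof.
move=> HX.
have [Hd Hc Hsep Hmu] := HX.
pose d := @mdist R X. pose mu := @mmeas R X.
pose K := [set C : set (mcar X) | exists2 x, esupp d mu x & C = cls x].
have cK : countable K.
  case: Hsep => s hs.
  apply: (@sub_countable _ _ K [set cls (s k) | k in [set: nat]]).
    apply: subset_card_le => C [x hx ->].
    have [k hk] := hs x 1%R ltr01; exists k => //.
    by rewrite (cls_eq HX (x := x) (y := s k)) // /cls /= (lt_trans hk) ?ltry.
  exact: card_image_le.
have [N [G [G1 G2 G3]]] := enum_count cK.
have [z0 _] := supp_n0 Hd Hmu Hsep.
pose xr n := epsilon (inhabits z0) (fun x => esupp d mu x /\ G n = cls x).
have hxr : forall n, nidx N n -> esupp d mu (xr n) /\ G n = cls (xr n).
  move=> n hn; rewrite /xr; apply: (epsilon_spec (inhabits z0) (fun x => esupp d mu x /\ G n = cls x)); have [x hx e] := G1 n hn; by exists x.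
pose a n := if nidx N n then cc (xr n) else 0%R.
pose Xs n := sub_mm (cls (xr n)) (cc (xr n)).
have HXs : forall n, nidx N n -> mm_space (Xs n).
  by move=> n hn; exact: (sub_space HX (hxr n hn).1).
pose F k := if nidx N k then cls (xr k) else set0.
have hFB : forall k, eborel d (F k).
  by move=> k; rewrite /F; case: ifP => _; [exact: cls_borel | exact: eborel0].
have hFa : forall k, mu (F k) = (a k)%:E.
  move=> k; rewrite /F /a; case: ifP => hk; last exact: (mu0 Hmu).
  exact: (cc_E HX (hxr k hk).1).
have hclsinj : forall i j, nidx N i -> nidx N j -> forall y,
    cls (xr i) y -> cls (xr j) y -> i = j.
  move=> i j hi hj y hyi hyj; apply: G2 => //.
  by rewrite (hxr i hi).2 (hxr j hj).2 (cls_eq HX hyi) (cls_eq HX hyj).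
have hFD : forall i j, i <> j -> F i `&` F j = set0.
  move=> i j ij; apply/seteqP; split => // y []; rewrite /F.
  case: ifP => hi; case: ifP => hj hyi hyj; try by case: hyi; try by case: hyj.
  by apply: ij; apply: (hclsinj i j hi hj y).
have hsuppF : esupp d mu `<=` \bigcup_k F k.
  move=> w hw.
  have [n hn e] := G3 (cls w) (ex_intro2 _ _ w hw erefl).
  exists n => //; rewrite /F hn -(hxr n hn).2 e; exact: cls_self.
have hU1 : mu (\bigcup_k F k) = 1%E.
  apply/eqP; rewrite eq_le; apply/andP; split.
    rewrite -(muT Hmu); apply: (mu_le Hmu) => //; [exact: eborel_bigcup | exact: eborelT].
  rewrite -(mu_supp Hd Hmu Hsep); apply: (mu_le Hmu) => //.
    exact: (supp_borel Hd Hmu).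
  exact: eborel_bigcup.
have HA : inA1 N a.
  split.
    move=> n hn; rewrite /a hn; apply/andP; split.
      exact: (cc_gt0 HX (hxr n hn).1).
    exact: (cc_le1 HX (hxr n hn).1).
  apply: inA1_sum.
    by move=> n hn; rewrite /a (negbTE hn).
  have := mu_sigma Hmu hFB hFD; rewrite -/mu hU1.
  have -> // : (fun n => (\sum_(0 <= i < n) mu (F i))%E) = (fun m => (\sum_(0 <= i < m) a i)%:E).
  apply/funext => m; rewrite -sumEFin; apply: eq_bigr => i _; exact: hFa.
exists N, a, Xs; split => //.
pose f := fun p : dsum_car N Xs => proj1_sig (projT2 p).
exists f; split.
- move=> p hp; have [n [hn [x ex]]] := dcase p; subst p.
  have := (supp_dinj HXs HA hn x).1 hp.
  exact: (sub_supp HX (hxr n hn).1 x).1.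
- move=> p p' hp hp'.
  have [n [hn [x ex]]] := dcase p; subst p.
  have [n' [hn' [x' ex']]] := dcase p'; subst p'.
  case: (eqVneq n n') => [enn|nn'].
    by subst n'; rewrite /= dist_same.
  rewrite /= dist_diff; last exact/eqP.
  apply/esym; apply: contrapT => hne; have hlt : (mdist (f (dinj hn x)) (f (dinj hn' x')) < +oo)%E by rewrite ltey eq_sym; apply/eqP.
  apply: (negP nn'); apply/eqP; apply: (hclsinj n n' hn hn' (proj1_sig x')).
    by apply: (cls_trans HX (proj2_sig x)).
  exact: (proj2_sig x').
- move=> y hy.
  have [n hn e] := G3 (cls y) (ex_intro2 _ _ y hy erefl).
  have hyc : cls (xr n) y by rewrite -(hxr n hn).2 e; exact: cls_self.
  exists (dinj hn (exist _ y hyc : mcar (Xs n))) => //.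
  apply/(supp_dinj HXs HA hn).
  by apply/(sub_supp HX (hxr n hn).1).
- move=> B hB.
  pose S := @msupp R (dsum N a Xs) `&` f @^-1` B.
  have hsupB : eborel d (esupp d mu) := supp_borel Hd Hmu.
  have hsl : forall n, nidx N n ->
      [set proj1_sig p | p in @dsum_slice R N Xs S n] = B `&` esupp d mu `&` F n.
    move=> n hn; apply/seteqP; split => y.
      case=> p [h [hS hBp]] <-; split; [split|] => //.
        exact: (sub_supp HX (hxr n hn).1 p).1 ((supp_dinj HXs HA h p).1 hS).
      by rewrite /F hn; exact: (proj2_sig p).
    case=> -[By hsy]; rewrite /F hn => hyc.
    exists (exist _ y hyc : mcar (Xs n)) => //; exists hn; split => //.
    apply/(supp_dinj HXs HA hn); exact: ((sub_supp HX (hxr n hn).1 (exist _ y hyc)).2 hsy).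
  have hterm : forall n, nidx N n ->
      ((a n)%:E * @mmeas R (Xs n) (@dsum_slice R N Xs S n) = mu (B `&` esupp d mu `&` F n))%E.
    move=> n hn; rewrite /= hsl // /a hn muleA -EFinM mulfV ?mul1e //.
    by rewrite gt_eqF // (cc_gt0 HX (hxr n hn).1).
  have hHB : forall i, eborel d (B `&` esupp d mu `&` F i).
    by move=> i; apply: eborelI => //; apply: eborelI.
  have hHD : forall i j, i <> j -> (B `&` esupp d mu `&` F i) `&` (B `&` esupp d mu `&` F j) = set0.
    move=> i j ij; apply/seteqP; split => // y [[_ hi] [_ hj]].
    by have : (F i `&` F j) y by []; rewrite hFD.
  rewrite /= /dsum_meas (eq_eseriesr hterm) eseries_mkcond.
  transitivity (\sum_(i <oo) mu (B `&` esupp d mu `&` F i))%E; last first.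
    congr (limn _); apply/funext => m; apply: eq_bigr => i _.
    case: ifP => // hi; rewrite /F hi setI0; by have := mu0 Hmu; rewrite -/mu => ->.
  rewrite (mu_series Hmu hHB hHD) -setI_bigcupr -setIA.
  rewrite (_ : esupp d mu `&` \bigcup_k F k = esupp d mu); last by apply/setIidl.
  by rewrite (mu_Isupp Hd Hmu Hsep hB).
Qed.

Close Scope ring_scope.
Close Scope classical_set_scope.

Theorem proposition3p8 (R : realType) :
  (forall X : mmdata R, ext_mm_space X ->
     exists (N : option nat) (a : nat -> R) (Xs : nat -> mmdata R),
       [/\ inA1 N a, (forall n, nidx N n -> mm_space (Xs n)) &
           mm_iso (dsum N a Xs) X])
  /\
  (forall (N M : option nat) (a b : nat -> R) (Xs Ys : nat -> mmdata R),
     inA1 N a -> inA1 M b ->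
     (forall n, nidx N n -> mm_space (Xs n)) ->
     (forall m, nidx M m -> mm_space (Ys m)) ->
     mm_iso (dsum N a Xs) (dsum M b Ys) ->
     N = M /\
     exists phi : nat -> nat,
       [/\ (forall n, nidx N n -> nidx N (phi n)),
           (forall n m, nidx N n -> nidx N m -> phi n = phi m -> n = m),
           (forall m, nidx N m -> exists2 n, nidx N n & phi n = m) &
           (forall n, nidx N n -> a n = b (phi n) /\ mm_iso (Xs n) (Ys (phi n)))]).
Proof.
split.
  by move=> X HX; exact: part1.
by move=> N M a b Xs Ys HA HB HX HY Hiso; exact: part2.
Qed.
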